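(* Let $B_1,\dots,B_D$ be resonator blocks and $\lambda\ge0$. Suppose every block propagation matrix $\mathcal{P}^\lambda_d$ ($d=1,\dots,D$) is hyperbolic and the family $\{\mathcal{P}^\lambda_1,\dots,\mathcal{P}^\lambda_D\}$ satisfies the source-sink condition. Suppose moreover that the line spanned by $(1,0)^\top$ lies in the connected component of $\mathbb{RP}^1\setminus\{s(\mathcal{P}^\lambda_1),\dots,s(\mathcal{P}^\lambda_D)\}$ containing all sinks $u(\mathcal{P}^\lambda_1),\dots,u(\mathcal{P}^\lambda_D)$. Then for every block sequence $\chi\in\{1,\dots,D\}^{\mathbb{Z}}$, the block propagation matrix cocycle $j\mapsto\mathcal{P}^\lambda_{\chi(j)}$ does not admit a uniformly hyperbolic splitting $(u,s)$ with $(1,0)^\top\in s(0)$.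
   Context: A resonator block $B_d$ is a finite sequence of $\mathrm{len}(B_d)\ge1$ triples $(v_k,\ell_k,s_k)$ of positive reals. With $P^\lambda_{\ell,s,v}=\begin{pmatrix}1-s\frac{\ell}{v^2}\lambda & s\\ -\frac{\ell}{v^2}\lambda & 1\end{pmatrix}$, the block propagation matrix is $\mathcal{P}^\lambda_d=P^\lambda_{\ell_L,s_L,v_L}\cdots P^\lambda_{\ell_1,s_1,v_1}\in\mathrm{SL}(2,\mathbb{R})$, $L=\mathrm{len}(B_d)$. $A\in\mathrm{SL}(2,\mathbb{R})$ is hyperbolic if $|\mathrm{tr}A|>2$; then with eigenvalues $|\xi_1|<1<|\xi_2|$ and eigenlines $E_1,E_2$ its source is $s(A)=E_1$ and sink $u(A)=E_2$ in $\mathbb{RP}^1$ (the space of lines in $\mathbb{R}^2$). The source-sink condition for hyperbolic $\{A_1,\dots,A_D\}$: all $u(A_d)$ lie in one connected component of $\mathbb{RP}^1\setminus\{s(A_1),\dots,s(A_D)\}$. A uniformly hyperbolic splitting of a bounded $A:\mathbb{Z}\to\mathrm{SL}(2,\mathbb{R})$ is a pair $s,u:\mathbb{Z}\to\mathbb{RP}^1$ with $A(j)u(j)=u(j+1)$, $A(j)s(j)=s(j+1)$ and constants $C>0,\eta>1$ with $\|A_{-n}(j)\vec u\|,\|A_n(j)\vec s\|\le C\eta^{-n}$ for all $j\in\mathbb{Z}$, $n\in\mathbb{N}$, unit $\vec u\in u(j)$, $\vec s\in s(j)$, where $A_n(j)=A(j+n-1)\cdots A(j)$, $A_{-n}(j)=A(j-n)^{-1}\cdots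 A(j-1)^{-1}$. *)

(* Defs.v *)
From HB Require Import structures.
From mathcomp Require Import all_boot all_order all_algebra.
From mathcomp Require Import all_classical all_reals.
From mathcomp Require Import topology normedtype.
Set Implicit Arguments. Unset Strict Implicit. Unset Printing Implicit Defensive.
Import Order.TTheory GRing.Theory Num.Theory.
Import numFieldTopology.Exports numFieldNormedType.Exports.
Local Open Scope classical_set_scope.
Local Open Scope ring_scope.

Section Defs.
Variable R : realType.

Definition mx2 (a b c d : R) : 'M[R]_2 :=
  \matrix_(i < 2, j < 2)
    if val i == 0%N then (if val j == 0%N then a else b)
    else (if val j == 0%N then c else d).

Definition vec2 (a b : R) : 'cV[R]_2 :=
  \col_(i < 2) (if val i == 0%N then a else b).

Definition vnorm (w : 'cV[R]_2) : R := Num.sqrt (w 0 0 ^+ 2 + w 1 0 ^+ 2).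

Definition Pmat (lam : R) (t : R * R * R) : 'M[R]_2 :=
  let: (v, l, s) := t in
  mx2 (1 - s * (l / v ^+ 2) * lam) s (- (l / v ^+ 2) * lam) 1.

Definition is_block (B : seq (R * R * R)) : Prop :=
  (0 < size B)%N /\
  forall t, t \in B -> [/\ 0 < t.1.1, 0 < t.1.2 & 0 < t.2].

(* block propagation matrix  P_L ... P_1  for B = [:: t_1; ...; t_L] *)
Definition block_prop (lam : R) (B : seq (R * R * R)) : 'M[R]_2 :=
  foldr (fun t M => M *m Pmat lam t) 1%:M B.

Definition hyperbolic (A : 'M[R]_2) : Prop := 2 < `|\tr A|.

(* points of RP^1 are lines, represented as sets of vectors *)
Definition span1 (v : 'cV[R]_2) : set 'cV[R]_2 := [set c *: v | c in setT].

Definition source (A : 'M[R]_2) : set 'cV[R]_2 :=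
  [set w | exists xi : R, `|xi| < 1 /\ A *m w = xi *: w].
Definition sink (A : 'M[R]_2) : set 'cV[R]_2 :=
  [set w | exists xi : R, 1 < `|xi| /\ A *m w = xi *: w].

(* x and y (points of RP^1) lie in the same (path-)connected component of
   RP^1 \ S: there is a continuous path of nonzero vectors in R^2 whose
   spanned lines avoid S, starting on x and ending on y (paths in RP^1 are
   exactly projections of such paths). *)
Definition same_component (S : set (set 'cV[R]_2)) (x y : set 'cV[R]_2) : Prop :=
  exists g1 g2 : R -> R,
    [/\ {within `[0, 1]%classic, continuous g1},
        {within `[0, 1]%classic, continuous g2},
        (forall t, 0 <= t <= 1 ->
           vec2 (g1 t) (g2 t) != 0 /\ ~ S (span1 (vec2 (g1 t) (g2 t)))),
        span1 (vec2 (g1 0) (g2 0)) = x &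
        span1 (vec2 (g1 1) (g2 1)) = y].

(* cocycle iterates A_n(j) = A(j+n-1)...A(j), A_{-n}(j) = A(j-n)^-1...A(j-1)^-1 *)
Fixpoint cocycle_fwd (A : int -> 'M[R]_2) (n : nat) (j : int) : 'M[R]_2 :=
  match n with
  | 0%N => 1%:M
  | m.+1 => A (j + m%:Z)%R *m cocycle_fwd A m j
  end.
Fixpoint cocycle_bwd (A : int -> 'M[R]_2) (n : nat) (j : int) : 'M[R]_2 :=
  match n with
  | 0%N => 1%:M
  | m.+1 => invmx (A (j - m.+1%:Z)%R) *m cocycle_bwd A m j
  end.

(* uniformly hyperbolic splitting (u, s); the lines u(j), s(j) in RP^1 are
   given by nonzero representative vectors, u(j) = span1 (u j). *)
Definition uh_splitting (A : int -> 'M[R]_2) (u s : int -> 'cV[R]_2) : Prop :=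
  [/\ forall j, u j != 0 /\ s j != 0,
      forall j, (fun w => A j *m w) @` span1 (u j) = span1 (u (j + 1)%R),
      forall j, (fun w => A j *m w) @` span1 (s j) = span1 (s (j + 1)%R) &
      exists C eta : R, [/\ 0 < C, 1 < eta &
        forall (j : int) (n : nat) (w : 'cV[R]_2),
          vnorm w = 1 ->
          (span1 (u j) w -> vnorm (cocycle_bwd A n j *m w) <= C * eta ^- n) /\
          (span1 (s j) w -> vnorm (cocycle_fwd A n j *m w) <= C * eta ^- n)]].

End Defs.

(* Main.v *)
Require Import Defs.
From HB Require Import structures.
From mathcomp Require Import all_boot all_order all_algebra.
From mathcomp Require Import all_classical all_reals.
From mathcomp Require Import topology normedtype.
From mathcomp Require Import ring lra.
Import Order.TTheory GRing.Theory Num.Theory.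
Import numFieldTopology.Exports numFieldNormedType.Exports.
Local Open Scope classical_set_scope.
Local Open Scope ring_scope.
Set Implicit Arguments. Unset Strict Implicit.

Section R1.
Variable R : realFieldType.

Lemma sqr_gt1 (m : R) : 1 < `|m| -> 1 < m ^+ 2.
Proof. by move=> h; rewrite -real_normK ?num_real // expr_gt1 // (lt_le_trans ltr01 (ltW h)). Qed.

Lemma sqr_lt1 (m : R) : `|m| < 1 -> m ^+ 2 < 1.
Proof.
move=> h; rewrite -real_normK ?num_real //.
have := normr_ge0 m; nra.
Qed.

Lemma D0_nz (a b c d u1 u2 w1 w2 mu xi : R) :
  a*u1 + b*u2 = mu*u1 -> c*u1 + d*u2 = mu*u2 ->
  a*w1 + b*w2 = xi*w1 -> c*w1 + d*w2 = xi*w2 ->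
  mu != xi -> (u1 != 0) || (u2 != 0) -> (w1 != 0) || (w2 != 0) ->
  u1*w2 - u2*w1 != 0.
Proof.
move=> Hu1 Hu2 Hw1 Hw2 Hmx Hu Hw; apply/eqP => HD.
have e1 : (xi - mu) * (u1 * w1) = 0.
  transitivity (u1*(a*w1 + b*w2) - w1*(a*u1 + b*u2)); first by rewrite Hu1 Hw1; ring.
  transitivity (b * (u1*w2 - u2*w1)); first by ring.
  by rewrite HD mulr0.
have e2 : (xi - mu) * (u2 * w2) = 0.
  transitivity (u2*(c*w1 + d*w2) - w2*(c*u1 + d*u2)); first by rewrite Hu2 Hw2; ring.
  transitivity (- c * (u1*w2 - u2*w1)); first by ring.
  by rewrite HD mulr0.
have e3 : (xi - mu) * (u1 * w2) = 0.
  transitivity (u1*(c*w1 + d*w2) - w1*(c*u1 + d*u2) - mu * (u1*w2 - u2*w1)); first by rewrite Hu2 Hw2; ring.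
  transitivity ((d - mu) * (u1*w2 - u2*w1)); first by ring.
  by rewrite HD mulr0.
have e4 : (xi - mu) * (u2 * w1) = 0.
  transitivity (u2*(a*w1 + b*w2) - w2*(a*u1 + b*u2) + mu * (u1*w2 - u2*w1)); first by rewrite Hu1 Hw1; ring.
  transitivity ((mu - a) * (u1*w2 - u2*w1)); first by ring.
  by rewrite HD mulr0.
have hxm : xi - mu != 0 by rewrite subr_eq0 eq_sym.
move/eqP: e1; move/eqP: e2; move/eqP: e3; move/eqP: e4.
rewrite !mulf_eq0 (negbTE hxm) /=.
case/orP: Hu => /negbTE hu; rewrite hu /= => h4 h3 h2 h1;
  by move: Hw; rewrite ?h1 ?h2 ?h3 ?h4.
Qed.


Lemma key_ineq (a b c d u1 u2 w1 w2 mu xi s t x y : R) :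
  a*d - b*c = 1 ->
  a*u1 + b*u2 = mu*u1 -> c*u1 + d*u2 = mu*u2 ->
  a*w1 + b*w2 = xi*w1 -> c*w1 + d*w2 = xi*w2 ->
  1 < `|mu| -> `|xi| < 1 -> (w1 != 0) || (w2 != 0) ->
  0 < (u1 - s*u2)*(u1 - t*u2) -> (w1 - s*w2)*(w1 - t*w2) <= 0 ->
  (x - s*y)*(x - t*y) <= ((a*x+b*y) - s*(c*x+d*y))*((a*x+b*y) - t*(c*x+d*y)).
Proof.
move=> Hdet Hu1 Hu2 Hw1 Hw2 Hmu Hxi Hw HFu HFw.
have Hu : (u1 != 0) || (u2 != 0).
  case: (eqVneq u1 0) => [h1|//]; case: (eqVneq u2 0) => [h2|//].
  by move: HFu; rewrite h1 h2; lra.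
have Hmx : mu != xi.
  apply/eqP => h; move: Hmu Hxi; rewrite h; lra.
have HD := @D0_nz a b c d u1 u2 w1 w2 mu xi Hu1 Hu2 Hw1 Hw2 Hmx Hu Hw.
set D0 := u1*w2 - u2*w1 in HD.
have Hmuxi : mu * xi = 1.
  apply: (mulIf HD); rewrite mul1r.
  transitivity ((a*u1 + b*u2)*(c*w1 + d*w2) - (c*u1 + d*u2)*(a*w1 + b*w2)).
    by rewrite Hu1 Hu2 Hw1 Hw2 /D0; ring.
  transitivity ((a*d - b*c) * D0); first by rewrite /D0; ring.
  by rewrite Hdet mul1r.
set X := x*w2 - y*w1.
set Y := u1*y - u2*x.
have Ex : D0 * x = X*u1 + Y*w1 by rewrite /D0 /X /Y; ring.
have Ey : D0 * y = X*u2 + Y*w2 by rewrite /D0 /X /Y; ring.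
have Ex' : D0 * (a*x+b*y) = X*mu*u1 + Y*xi*w1.
  transitivity (X*(a*u1+b*u2) + Y*(a*w1+b*w2)); last by rewrite Hu1 Hw1; ring.
  by rewrite /D0 /X /Y; ring.
have Ey' : D0 * (c*x+d*y) = X*mu*u2 + Y*xi*w2.
  transitivity (X*(c*u1+d*u2) + Y*(c*w1+d*w2)); last by rewrite Hu2 Hw2; ring.
  by rewrite /D0 /X /Y; ring.
have HD2 : 0 < D0 ^+ 2 by rewrite exprn_even_gt0 //.
rewrite -(ler_pM2l HD2).
have -> : D0 ^+ 2 * ((x - s*y)*(x - t*y)) = (D0*x - s*(D0*y))*(D0*x - t*(D0*y)) by ring.
have -> : D0 ^+ 2 * (((a*x+b*y) - s*(c*x+d*y))*((a*x+b*y) - t*(c*x+d*y)))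
   = (D0*(a*x+b*y) - s*(D0*(c*x+d*y)))*(D0*(a*x+b*y) - t*(D0*(c*x+d*y))) by ring.
rewrite Ex Ey Ex' Ey' -subr_ge0.
set Fu := (u1 - s*u2)*(u1 - t*u2) in HFu *.
set Fw := (w1 - s*w2)*(w1 - t*w2) in HFw *.
have -> : (X * mu * u1 + Y * xi * w1 - s * (X * mu * u2 + Y * xi * w2)) *
  (X * mu * u1 + Y * xi * w1 - t * (X * mu * u2 + Y * xi * w2)) -
  (X * u1 + Y * w1 - s * (X * u2 + Y * w2)) * (X * u1 + Y * w1 - t * (X * u2 + Y * w2))
  = X^+2 * (mu^+2 - 1) * Fu + Y^+2 * (1 - xi^+2) * (- Fw)
    + X*Y*(mu*xi - 1) * ((u1 - s*u2)*(w1 - t*w2) + (w1 - s*w2)*(u1 - t*u2)).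
  by rewrite /Fu /Fw; ring.
rewrite Hmuxi subrr mulr0 mul0r addr0.
have h1 := @sqr_gt1 mu Hmu; have h2 := @sqr_lt1 xi Hxi.
have hF1 : 0 <= Fu by lra.
have hF2 : 0 <= - Fw by lra.
have hm : 0 <= mu^+2 - 1 by lra.
have hx : 0 <= 1 - xi^+2 by lra.
by apply: addr_ge0; apply: mulr_ge0 => //; apply: mulr_ge0 => //; rewrite sqr_ge0.
Qed.

Lemma charpoly0 (a b c d u1 u2 mu : R) :
  a*u1 + b*u2 = mu*u1 -> c*u1 + d*u2 = mu*u2 -> (u1 != 0) || (u2 != 0) ->
  (a - mu)*(d - mu) - b*c = 0.
Proof.
move=> H1 H2 Hu.
have e1 : ((a - mu)*(d - mu) - b*c) * u1 = 0.
  transitivity ((d - mu)*((a*u1 + b*u2) - mu*u1) - b*((c*u1 + d*u2) - mu*u2)); first by ring.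
  by rewrite H1 H2 !subrr; ring.
have e2 : ((a - mu)*(d - mu) - b*c) * u2 = 0.
  transitivity ((a - mu)*((c*u1 + d*u2) - mu*u2) - c*((a*u1 + b*u2) - mu*u1)); first by ring.
  by rewrite H1 H2 !subrr; ring.
move/eqP: e1; move/eqP: e2; rewrite !mulf_eq0.
by case/orP: Hu => /negbTE h; rewrite h ?orbF; [move=> _ /eqP | move=> /eqP].
Qed.

Lemma source_exists (a b c d u1 u2 mu : R) :
  a*d - b*c = 1 ->
  a*u1 + b*u2 = mu*u1 -> c*u1 + d*u2 = mu*u2 -> (u1 != 0) || (u2 != 0) ->
  1 < `|mu| ->
  exists w1 w2 xi, [/\ (w1 != 0) || (w2 != 0), `|xi| < 1,
     a*w1 + b*w2 = xi*w1 & c*w1 + d*w2 = xi*w2].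
Proof.
move=> Hdet H1 H2 Hu Hmu.
have Hch := charpoly0 H1 H2 Hu.
have mu0 : mu != 0 by apply/eqP => h; move: Hmu; rewrite h normr0; lra.
set xi := mu^-1.
have Hxi : `|xi| < 1.
  rewrite /xi normrV ?unitfE // invf_lt1 //; lra.
have Hch2 : xi^+2 - (a+d)*xi + 1 = 0.
  have -> : xi^+2 - (a+d)*xi + 1 = xi^+2 * ((a - mu)*(d - mu) - b*c + (1 - (a*d - b*c))).
    rewrite /xi; field; exact: mu0.
  by rewrite Hch Hdet subrr addr0 mulr0.
case: (boolP ((b != 0) || (xi - a != 0))) => Hw.
  exists b, (xi - a), xi; split => //.
  - by ring.
  - transitivity (xi*(xi - a) - (xi^+2 - (a+d)*xi + 1) + (1 - (a*d - b*c))); first by ring.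
    by rewrite Hch2 Hdet subrr; ring.
move: Hw; rewrite negb_or !negbK => /andP [/eqP hb /eqP ha].
exists (xi - d), c, xi; split => //.
- case: (boolP ((xi - d != 0) || (c != 0))) => // /norP [/negbNE/eqP hd /negbNE/eqP hc].
  exfalso.
  have : a*d - b*c = xi^+2.
    have -> : a = xi by apply/esym/eqP; rewrite -subr_eq0 ha.
    have -> : d = xi by apply/esym/eqP; rewrite -subr_eq0 hd.
    by rewrite hb; ring.
  rewrite Hdet => h1; have := sqr_lt1 Hxi; rewrite -h1; lra.
- transitivity (xi*(xi - d) - (xi^+2 - (a+d)*xi + 1) + (1 - (a*d - b*c))); first by ring.
  by rewrite Hch2 Hdet subrr; ring.
- by ring.
Qed.

Lemma source_line (a b c d u1 u2 mu w1 w2 xi v1 v2 xi' : R) :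
  a*d - b*c = 1 ->
  a*u1 + b*u2 = mu*u1 -> c*u1 + d*u2 = mu*u2 -> (u1 != 0) || (u2 != 0) ->
  1 < `|mu| ->
  a*w1 + b*w2 = xi*w1 -> c*w1 + d*w2 = xi*w2 -> (w1 != 0) || (w2 != 0) ->
  `|xi| < 1 ->
  a*v1 + b*v2 = xi'*v1 -> c*v1 + d*v2 = xi'*v2 -> `|xi'| < 1 ->
  v1*w2 - v2*w1 = 0.
Proof.
move=> Hdet Hu1 Hu2 Hu Hmu Hw1 Hw2 Hw Hxi Hv1 Hv2 Hxi'.
have Hmx : mu != xi by apply/eqP => h; move: Hmu Hxi; rewrite h; lra.
have HD := @D0_nz a b c d u1 u2 w1 w2 mu xi Hu1 Hu2 Hw1 Hw2 Hmx Hu Hw.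
set D0 := u1*w2 - u2*w1 in HD.
set X := v1*w2 - v2*w1.
set Y := u1*v2 - u2*v1.
have e1 : X*mu*u1 + Y*xi*w1 = xi'*(X*u1 + Y*w1).
  transitivity (X*(a*u1+b*u2) + Y*(a*w1+b*w2)); first by rewrite Hu1 Hw1; ring.
  transitivity (D0 * (a*v1 + b*v2)); first by rewrite /D0 /X /Y; ring.
  by rewrite Hv1 /D0 /X /Y; ring.
have e2 : X*mu*u2 + Y*xi*w2 = xi'*(X*u2 + Y*w2).
  transitivity (X*(c*u1+d*u2) + Y*(c*w1+d*w2)); first by rewrite Hu2 Hw2; ring.
  transitivity (D0 * (c*v1 + d*v2)); first by rewrite /D0 /X /Y; ring.
  by rewrite Hv2 /D0 /X /Y; ring.
have e3 : X * (mu - xi') * D0 = 0.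
  transitivity (w2 * (X*mu*u1 + Y*xi*w1 - xi'*(X*u1 + Y*w1))
              - w1 * (X*mu*u2 + Y*xi*w2 - xi'*(X*u2 + Y*w2))); first by rewrite /D0; ring.
  by rewrite e1 e2 !subrr; ring.
have hm : mu - xi' != 0 by rewrite subr_eq0; apply/eqP => h; move: Hmu Hxi'; rewrite h; lra.
by move/eqP: e3; rewrite !mulf_eq0 (negbTE hm) (negbTE HD) !orbF => /eqP.
Qed.

End R1.

Section R2.
Variable R : realFieldType.
Lemma Fw_le0 (s t tau w2 : R) : s <= tau -> tau <= t ->
  (tau*w2 - s*w2)*(tau*w2 - t*w2) <= 0.
Proof.
move=> h1 h2.
have -> : (tau*w2 - s*w2)*(tau*w2 - t*w2) = - (w2^+2 * ((tau - s)*(t - tau))) by ring.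
rewrite oppr_le0; apply: mulr_ge0; first exact: sqr_ge0.
apply: mulr_ge0; lra.
Qed.

Lemma F_bound (s t x y : R) :
  (x - s*y)*(x - t*y) <= (2 + s^+2 + t^+2) * (x^+2 + y^+2).
Proof.
have h1 : (x - s*y)*(x - t*y) <= ((x - s*y)^+2 + (x - t*y)^+2) / 2.
  have := sqr_ge0 ((x - s*y) - (x - t*y)); rewrite ler_pdivlMr //. move=> h. nra.
have h2 : (x - s*y)^+2 <= 2 * x^+2 + 2 * (s^+2 * y^+2).
  have := sqr_ge0 (x + s*y); nra.
have h3 : (x - t*y)^+2 <= 2 * x^+2 + 2 * (t^+2 * y^+2).
  have := sqr_ge0 (x + t*y); nra.
have hx := sqr_ge0 x; have hy := sqr_ge0 y; have hs := sqr_ge0 s; have ht := sqr_ge0 t.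
have h4 : 0 <= s^+2 * x^+2 by apply: mulr_ge0.
have h5 : 0 <= t^+2 * x^+2 by apply: mulr_ge0.
have h6 : 0 <= y^+2 by [].
have -> : (2 + s^+2 + t^+2) * (x^+2 + y^+2) = 2 * x^+2 + 2 * y^+2 + s^+2 * x^+2 + t^+2 * x^+2 + s^+2 * y^+2 + t^+2 * y^+2 by ring.
lra.
Qed.

Lemma dt_trans (w1 w2 x1 x2 v1 v2 : R) : (w1 != 0) || (w2 != 0) ->
  x1*w2 - x2*w1 = 0 -> v1*w2 - v2*w1 = 0 -> x1*v2 - x2*v1 = 0.
Proof.
move=> hw hx hv.
have e1 : w2 * (x1*v2 - x2*v1) = 0.
  transitivity (v2 * (x1*w2 - x2*w1) - x2 * (v1*w2 - v2*w1)); first by ring.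
  by rewrite hx hv; ring.
have e2 : w1 * (x1*v2 - x2*v1) = 0.
  transitivity (x1 * (v2*w1 - v1*w2) + v1 * (x1*w2 - x2*w1)); first by ring.
  have -> : v2*w1 - v1*w2 = - (v1*w2 - v2*w1) by ring.
  by rewrite hx hv; ring.
move/eqP: e1; move/eqP: e2; rewrite !mulf_eq0.
by case/orP: hw => /negbTE ->; [move=> /eqP | move=> _ /eqP].
Qed.

Lemma bernoulli (e : R) (n : nat) : 1 <= e -> 1 + n%:R * (e - 1) <= e ^+ n.
Proof.
move=> he; elim: n => [|n IH]; first by rewrite mul0r addr0 expr0.
rewrite exprS.
have h1 : 0 <= e ^+ n by apply: exprn_ge0; lra.
have h2 : 1 <= e ^+ n by apply: exprn_ege1.
rewrite -natr1 (_ : 1 + (n%:R + 1) * (e - 1) = (1 + n%:R * (e - 1)) + (e - 1)); last by ring.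
nra.
Qed.
End R2.

Section G.
Variable R : realType.

Lemma mulmx2E (M : 'M[R]_2) (N : 'M[R]_(2,1)) i j :
  (M *m N) i j = M i 0 * N 0 j + M i 1 * N 1 j.
Proof. rewrite !mxE !big_ord_recl big_ord0 addr0. have -> : (ord0 : 'I_2) = 0 by apply: val_inj. by have -> : (lift ord0 ord0 : 'I_2) = 1 by apply: val_inj. Qed.

Lemma mulmm2E (M N : 'M[R]_2) i j :
  (M *m N) i j = M i 0 * N 0 j + M i 1 * N 1 j.
Proof. rewrite !mxE !big_ord_recl big_ord0 addr0. have -> : (ord0 : 'I_2) = 0 by apply: val_inj. by have -> : (lift ord0 ord0 : 'I_2) = 1 by apply: val_inj. Qed.

Lemma cV2P (v w : 'cV[R]_2) : v 0 0 = w 0 0 -> v 1 0 = w 1 0 -> v = w.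
Proof.
move=> h0 h1; apply/matrixP => i j; rewrite (ord1 j).
case: i => [[|[|i]]] Hi //.
- by rewrite (_ : Ordinal Hi = 0) //; apply: val_inj.
- by rewrite (_ : Ordinal Hi = 1) //; apply: val_inj.
Qed.

Lemma vec2E0 (a b : R) : (vec2 a b) 0 0 = a.
Proof. by rewrite !mxE. Qed.
Lemma vec2E1 (a b : R) : (vec2 a b) 1 0 = b.
Proof. by rewrite !mxE. Qed.

Lemma nz2 (v : 'cV[R]_2) : v != 0 -> (v 0 0 != 0) || (v 1 0 != 0).
Proof.
move=> hv; rewrite -negb_and; apply: contra hv => /andP [/eqP h0 /eqP h1].
by apply/eqP; apply: cV2P; rewrite mxE.
Qed.

Lemma eig2 (M : 'M[R]_2) (w : 'cV[R]_2) xi : M *m w = xi *: w ->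
  M 0 0 * w 0 0 + M 0 1 * w 1 0 = xi * w 0 0 /\
  M 1 0 * w 0 0 + M 1 1 * w 1 0 = xi * w 1 0.
Proof.
move=> h; split.
- by rewrite -mulmx2E h mxE.
- by rewrite -mulmx2E h mxE.
Qed.

Lemma eig2' (M : 'M[R]_2) (w : 'cV[R]_2) xi :
  M 0 0 * w 0 0 + M 0 1 * w 1 0 = xi * w 0 0 ->
  M 1 0 * w 0 0 + M 1 1 * w 1 0 = xi * w 1 0 -> M *m w = xi *: w.
Proof. by move=> h0 h1; apply: cV2P; rewrite mulmx2E mxE. Qed.

Lemma bp_det lam (Bs : seq (R * R * R)) :
  (block_prop lam Bs) 0 0 * (block_prop lam Bs) 1 1
  - (block_prop lam Bs) 0 1 * (block_prop lam Bs) 1 0 = 1.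
Proof.
elim: Bs => [|[[v l] s] Bs IH] /=.
  by rewrite !mxE /=; ring.
rewrite !mulmm2E /Pmat !mxE /=.
set a := (block_prop lam Bs) 0 0 in IH *.
set b := (block_prop lam Bs) 0 1 in IH *.
set c := (block_prop lam Bs) 1 0 in IH *.
set d := (block_prop lam Bs) 1 1 in IH *.
  rewrite -[RHS]IH; rewrite /a /b /c /d; ring.
Qed.

Lemma parallel (v x : 'cV[R]_2) : (v 0 0 != 0) || (v 1 0 != 0) ->
  x 0 0 * v 1 0 - x 1 0 * v 0 0 = 0 -> exists c, x = c *: v.
Proof.
move=> hv hd; case/orP: hv => h.
- exists (x 0 0 / v 0 0); apply: cV2P; rewrite !mxE.
    by rewrite divfK.
  apply/eqP; rewrite -subr_eq0; apply/eqP.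
  rewrite mulrAC -[X in X - _](mulfK h) -mulrBl; move/eqP: hd; rewrite subr_eq0 => /eqP ->.
  by rewrite subrr mul0r.
- exists (x 1 0 / v 1 0); apply: cV2P; rewrite !mxE; last by rewrite divfK.
  apply/eqP; rewrite -subr_eq0; apply/eqP.
  rewrite mulrAC -[X in X - _](mulfK h) -mulrBl; move/eqP: hd; rewrite subr_eq0 => /eqP ->.
  by rewrite subrr mul0r.
Qed.

End G.

Unset Implicit Arguments. Set Strict Implicit.

Theorem corollary4p5 (R : realType) (D : nat) (B : 'I_D -> seq (R * R * R))
    (lam : R) :
  (forall d, is_block (B d)) ->
  0 <= lam ->
  (forall d, hyperbolic (block_prop lam (B d))) ->
  (* source-sink condition: all sinks lie in one connected component of
     RP^1 minus the sources *)
  (forall d d', same_component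
     (fun L => exists d0, L = source (block_prop lam (B d0)))
     (sink (block_prop lam (B d))) (sink (block_prop lam (B d')))) ->
  (* the line spanned by (1,0)^T lies in that component *)
  (forall d, same_component
     (fun L => exists d0, L = source (block_prop lam (B d0)))
     (span1 (vec2 1 0)) (sink (block_prop lam (B d)))) ->
  forall chi : int -> 'I_D,
    ~ exists u s : int -> 'cV[R]_2,
        uh_splitting (fun j => block_prop lam (B (chi j))) u s /\
        span1 (s 0) (vec2 1 0).
Proof.
move=> _ _ _ _ Hcomp chi [u [s [[_ _ _ [C [eta [HC Heta Hbd]]]] Hs0]]].
have Hdet d := bp_det lam (B d).
have h00 : 0 <= (0:R) <= 1 by rewrite lexx ler01.
have h11 : 0 <= (1:R) <= 1 by rewrite lexx ler01.
have Hsink : forall d, exists (ud : 'cV[R]_2) mu,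
    [/\ ud != 0, 1 < `|mu| & block_prop lam (B d) *m ud = mu *: ud].
  move=> d; have [g1 [g2 [_ _ Hp _ H1]]] := Hcomp d.
  have : sink (block_prop lam (B d)) (vec2 (g1 1) (g2 1)).
    by rewrite -H1; exists 1 => //; rewrite scale1r.
  case=> mu [hmu heq]; exists (vec2 (g1 1) (g2 1)), mu; split => //.
  by have [] := Hp 1; rewrite ?ler01 ?lexx.
have Hsrc : forall d, exists w : 'cV[R]_2,
    [/\ (w 0 0 != 0) || (w 1 0 != 0),
        exists xi, `|xi| < 1 /\ block_prop lam (B d) *m w = xi *: w &
        forall v : 'cV[R]_2, (v 0 0 != 0) || (v 1 0 != 0) ->
          v 0 0 * w 1 0 - v 1 0 * w 0 0 = 0 ->
          span1 v = source (block_prop lam (B d))].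
  move=> d; have [ud [mu [hud hmu heq]]] := Hsink d.
  have [hu1 hu2] := eig2 heq.
  have hud' := nz2 hud.
  have [w1 [w2 [xi [hw hxi hw1 hw2]]]] := source_exists (Hdet d) hu1 hu2 hud' hmu.
  exists (vec2 w1 w2); rewrite !vec2E0 !vec2E1; split => //.
    by exists xi; split => //; apply: eig2'; rewrite !vec2E0 !vec2E1.
  move=> v hv hdt; apply/seteqP; split => x.
  - case=> c _ <-.
    have [k ->] : exists k, v = k *: vec2 w1 w2.
      by apply: parallel; rewrite !vec2E0 !vec2E1.
    exists xi; split => //.
    rewrite -!scalemxAr (eig2' (w := vec2 w1 w2) (xi := xi)) ?vec2E0 ?vec2E1 //.
    by rewrite !scalerA; congr (_ *: _); ring.
  - case=> xi' [hxi' hx].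
    have [hx1 hx2] := eig2 hx.
    have hl := source_line (Hdet d) hu1 hu2 hud' hmu hw1 hw2 hw hxi hx1 hx2 hxi'.
    have hxv := dt_trans hw hl hdt.
    have [c ->] := parallel hv hxv.
    by exists c.
case: (choice Hsrc) => wf Hwf.
have Havoid : forall v : 'cV[R]_2, v != 0 ->
    ~ (fun L => exists d0, L = source (block_prop lam (B d0))) (span1 v) ->
    forall b, v 0 0 * wf b 1 0 - v 1 0 * wf b 0 0 != 0.
  move=> v hv hS b; apply/eqP => h; apply: hS; exists b.
  by have [_ _ H] := Hwf b; apply: H => //; exact: nz2.
have Hstart : forall (g1 g2 : R -> R),
    span1 (vec2 (g1 0) (g2 0)) = span1 (vec2 1 0) -> g2 0 = 0.
  move=> g1 g2 h.
  have : span1 (vec2 1 0) (vec2 (g1 0) (g2 0)) by rewrite -h; exists 1 => //; rewrite scale1r.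
  case=> c _ /(congr1 (fun m : 'cV[R]_2 => m 1 0)).
  by rewrite !mxE /= mulr0.
have Hw2 : forall b, wf b 1 0 != 0.
  move=> b; have [g1 [g2 [_ _ Hp H0 _]]] := Hcomp b.
  have [hnz hnS] := Hp 0 h00.
  have := Havoid _ hnz hnS b.
  rewrite !vec2E0 !vec2E1 (Hstart g1 g2 H0) mul0r subr0.
  by rewrite mulf_eq0 negb_or => /andP [].
pose i0 := chi 0.
pose tau := fun b => wf b 0 0 / wf b 1 0.
have [bmin Hmin] : exists bm, forall b, tau bm <= tau b.
  case: (@real_arg_minP R _ i0 xpredT tau isT (fun i _ => num_real (tau i))) => bm _ H.
  by exists bm => b; apply: H.
have [bmax Hmax] : exists bm, forall b, tau b <= tau bm.
  case: (@real_arg_maxP R _ i0 xpredT tau isT (fun i _ => num_real (tau i))) => bm _ H.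
  by exists bm => b; apply: H.
pose smin := tau bmin.
pose smax := tau bmax.
have Htau : forall b, wf b 0 0 = tau b * wf b 1 0.
  by move=> b; rewrite /tau divfK.
pose F := fun v : 'cV[R]_2 => (v 0 0 - smin * v 1 0) * (v 0 0 - smax * v 1 0).
have HFw : forall b, F (wf b) <= 0.
  move=> b; rewrite /F Htau; apply: Fw_le0; [exact: Hmin | exact: Hmax].
have HF0 : forall v : 'cV[R]_2, v != 0 ->
    ~ (fun L => exists d0, L = source (block_prop lam (B d0))) (span1 v) ->
    F v != 0.
  move=> v hv hS; rewrite /F mulf_eq0 negb_or; apply/andP; split.
  - have := Havoid v hv hS bmin; apply: contra => /eqP h.
    rewrite (Htau bmin) -/smin; apply/eqP.
    have -> : v 0 0 = smin * v 1 0 by apply/eqP; rewrite -subr_eq0 h.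
    by ring.
  - have := Havoid v hv hS bmax; apply: contra => /eqP h.
    rewrite (Htau bmax) -/smax; apply/eqP.
    have -> : v 0 0 = smax * v 1 0 by apply/eqP; rewrite -subr_eq0 h.
    by ring.
have Hpos : forall d, exists (ud : 'cV[R]_2) mu,
    [/\ 0 < F ud, 1 < `|mu| & block_prop lam (B d) *m ud = mu *: ud].
  move=> d; have [g1 [g2 [Hc1 Hc2 Hp H0 H1]]] := Hcomp d.
  have : sink (block_prop lam (B d)) (vec2 (g1 1) (g2 1)).
    by rewrite -H1; exists 1 => //; rewrite scale1r.
  case=> mu [hmu heq]; exists (vec2 (g1 1) (g2 1)), mu; split => //.
  pose f := fun t => (g1 t - smin * g2 t) * (g1 t - smax * g2 t).
  have Hf : forall t, 0 <= t <= 1 -> f t != 0.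
    move=> t ht; have [hnz hnS] := Hp t ht.
    by have := HF0 _ hnz hnS; rewrite /F !vec2E0 !vec2E1.
  have Hf0 : 0 < f 0.
    have [hnz _] := Hp 0 h00.
    have := nz2 hnz; rewrite !vec2E0 !vec2E1 (Hstart g1 g2 H0) eqxx orbF => hg.
    by rewrite /f (Hstart g1 g2 H0) !mulr0 !subr0 -expr2 exprn_even_gt0.
  have Hfc : {within `[0, 1], continuous f}.
    move=> x; rewrite /f; apply: cvgM.
    - apply: cvgB; first exact: Hc1.
      apply: cvgM; [exact: cvg_cst | exact: Hc2].
    - apply: cvgB; first exact: Hc1.
      apply: cvgM; [exact: cvg_cst | exact: Hc2].
  rewrite /F !vec2E0 !vec2E1 -/(f 1).
  have := Hf 1 h11.
  case: ltgtP => // hlt _.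
  have hmm : Num.min (f 0) (f 1) <= 0 <= Num.max (f 0) (f 1).
    by rewrite ge_min le_max (ltW hlt) (ltW Hf0) orbT.
  have [c hc hfc] := IVT ler01 Hfc hmm.
  move: hc; rewrite in_itv /= => hc.
  by move: (Hf c hc); rewrite hfc eqxx.
have Hkey : forall d v, F v <= F (block_prop lam (B d) *m v).
  move=> d v; have [ud [mu [hFu hmu heq]]] := Hpos d.
  have [hu1 hu2] := eig2 heq.
  have [hw _ _] := Hwf d.
  have [_ [xi [hxi hweq]] _] := Hwf d.
  have [hw1 hw2] := eig2 hweq.
  rewrite /F !mulmx2E.
  exact: (key_ineq (v 0 0) (v 1 0) (Hdet d) hu1 hu2 hw1 hw2 hmu hxi hw hFu (HFw d)).
pose A := fun j => block_prop lam (B (chi j)).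
have Hgrow : forall n, 1 <= F (cocycle_fwd A n 0 *m vec2 1 0).
  elim=> [|n IH] /=.
    by rewrite mul1mx /F !vec2E0 !vec2E1 !mulr0 !subr0 mulr1.
  by rewrite -mulmxA; apply: (le_trans IH); apply: Hkey.
pose K := 2 + smin ^+ 2 + smax ^+ 2.
have HK : 0 < K by rewrite /K; have := sqr_ge0 smin; have := sqr_ge0 smax; lra.
have He1 : vnorm (vec2 1 0 : 'cV[R]_2) = 1.
  by rewrite /vnorm !vec2E0 !vec2E1 expr1n expr0n /= addr0 sqrtr1.
have Hb : forall n, 1 <= K * (C * eta ^- n) ^+ 2.
  move=> n; have [_ H] := Hbd 0 n (vec2 1 0) He1.
  have hv := H Hs0.
  set w := cocycle_fwd A n 0 *m vec2 1 0 in hv.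
  apply: (le_trans (Hgrow n)); rewrite -/w.
  apply: (le_trans (F_bound smin smax (w 0 0) (w 1 0))); rewrite -/K.
  rewrite ler_pM2l //.
  have hv0 : 0 <= vnorm w by rewrite /vnorm sqrtr_ge0.
  have -> : w 0 0 ^+ 2 + w 1 0 ^+ 2 = vnorm w ^+ 2.
    by rewrite /vnorm sqr_sqrtr // addr_ge0 // sqr_ge0.
  by rewrite ler_sqr // ?nnegrE // (le_trans hv0 hv).
have eta0 : 0 < eta by lra.
pose x := K * C ^+ 2 / (eta - 1).
have hx0 : 0 <= x by rewrite /x divr_ge0 ?mulr_ge0 ?sqr_ge0 //; lra.
pose n := (Num.truncn x).+1.
have hn : x < n%:R by exact: truncnS_gt.
have := Hb n.
have hen : 0 < eta ^+ n by apply: exprn_gt0.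
have hbern := bernoulli n (ltW Heta).
move=> h.
set E := eta ^+ n in hen hbern h.
have hE1 : 1 <= E by rewrite /E; apply: exprn_ege1; lra.
have hE2 : E ^+ 2 <= K * C ^+ 2.
  have hE20 : 0 < E ^+ 2 by apply: exprn_gt0.
  move: h; rewrite exprMn exprVn mulrA.
  by rewrite ler_pdivlMr // mul1r.
have hxe : x * (eta - 1) = K * C ^+ 2.
  by rewrite /x divfK //; apply/eqP => h0; move: Heta; lra.
have hnx : K * C ^+ 2 < n%:R * (eta - 1).
  by rewrite -hxe ltr_pM2r //; lra.
have hEE : E <= E ^+ 2 by rewrite expr2 ler_peMl //; lra.
lra.
Qed.
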